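(* Let $C$ be a ring of characteristic zero. For any non-empty set $X$, the free Baxter algebra $\text{Ш}_C(X)$ is not a noetherian algebra.
   Context: For a commutative $C$-algebra $A$ and $\lambda\in C$, the shuffle Baxter algebra $\text{Ш}_C(A)=\bigoplus_{k\in\mathbb{N}}A^{\otimes(k+1)}$ has product $(x_0\otimes x_1\otimes\cdots\otimes x_m)(y_0\otimes y_1\otimes\cdots\otimes y_n)=x_0y_0\otimes(\text{sum over mixable shuffles of } x_1\otimes\cdots\otimes x_m \text{ and } y_1\otimes\cdots\otimes y_n)$, where a mixable shuffle is a shuffle of the two words in which some adjacent pairs (an $x_i$ immediately followed by a $y_j$) are replaced by the product $x_iy_j$, each such merger contributing a factor $\lambda$; the Baxter operator is $P_A(x_0\otimes\cdots\otimes x_n)=\mathbf{1}_A\otimes x_0\otimes\cdots\otimes x_n$. It is the free Baxter $C$-algebra of weight $\lambda$ on $A$. For a set $X$, $\text{Ш}_C(X):=\text{Ш}_C(C[X])$ is the free Baxter $C$-algebra of weight $\lambda$ on $X$ (here $\lambda\in C$ arbitrary). *)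

(* Defs.v *)
From HB Require Import structures.
From mathcomp Require Import all_boot all_algebra.
From mathcomp Require Import finmap.
From mathcomp Require Import monalg.
Set Implicit Arguments. Unset Strict Implicit. Unset Printing Implicit Defensive.
Import GRing.Theory.
Local Open Scope ring_scope.

Definition char_zero (C : comNzRingType) : Prop :=
  forall n : nat, (0 < n)%N -> (n%:R : C) != 0.

Section Shuffle.
Variables (C : comNzRingType) (X : choiceType) (lambda : C).

Definition Mon := {cmonom X}.

(* A^{\otimes (k+1)} with A = C[X] has C-basis the (k+1)-tuples of monomials;
   hence Sha_C(X) = (+)_k A^{\otimes(k+1)} is the free C-module on the
   words (x0, [x1; ...; xk]) of monomials. *)
Definition Word := (Mon * seq Mon)%type.
Definition Sha := {malg C[Word]}.

Definition pre (a : Mon) (p : {malg C[seq Mon]}) : {malg C[seq Mon]} :=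
  \sum_(w <- msupp p) << p@_w *g (a :: w) >>.

(* Sum over the mixable shuffles of u and v (weight lambda): every shuffle
   of u and v in which some pairs x_i y_j (x_i immediately followed by y_j)
   are merged into x_i y_j, each merger giving a factor lambda.  Computed by
   the recursion on the first letter of a mixable shuffle (x_i alone, y_j
   alone, or the merged x_i y_j). *)
Fixpoint mshuffle (u : seq Mon) : seq Mon -> {malg C[seq Mon]} :=
  match u with
  | [::] => fun v => << v >>
  | a :: u' =>
      fix msh_r (v : seq Mon) : {malg C[seq Mon]} :=
        match v with
        | [::] => << a :: u' >>
        | b :: v' =>
            pre a (mshuffle u' v) + pre b (msh_r v')
            + lambda *: pre (mulcm a b) (mshuffle u' v')
        end
  end.

(* Product of two basis tensors:
   (x0 (x) x1..xm)(y0 (x) y1..yn) = x0 y0 (x) (mixable shuffles). *)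
Definition word_mul (w1 w2 : Word) : Sha :=
  let p := mshuffle w1.2 w2.2 in
  \sum_(w <- msupp p) << p@_w *g (mulcm w1.1 w2.1, w) >>.

Definition sha_mul (f g : Sha) : Sha :=
  \sum_(u <- msupp f) \sum_(v <- msupp g) (f@_u * g@_v) *: word_mul u v.

Definition sha_P (f : Sha) : Sha :=
  \sum_(u <- msupp f) << f@_u *g (onecm X, u.1 :: u.2) >>.

(* Ideals of Sha_C(X) (the algebra is commutative). *)
Definition sha_ideal (I : Sha -> Prop) : Prop :=
  [/\ I 0,
      (forall x y, I x -> I y -> I (x - y)) &
      (forall r x, I x -> I (sha_mul r x))].

Definition sha_noetherian : Prop :=
  forall I : nat -> Sha -> Prop,
    (forall n, sha_ideal (I n)) ->
    (forall n x, I n x -> I n.+1 x) ->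
    exists N, forall n, (N <= n)%N -> forall x, I n x <-> I N x.

End Shuffle.

(* Main.v *)
Require Import Defs.
From HB Require Import structures.
From mathcomp Require Import all_boot all_algebra.
From mathcomp Require Import finmap.
From mathcomp Require Import monalg.
From mathcomp Require Import ring.
Set Implicit Arguments. Unset Strict Implicit. Unset Printing Implicit Defensive.
Import GRing.Theory.
Local Open Scope fset_scope.
Local Open Scope ring_scope.


Section Pairing.
Variables (C : comNzRingType) (X : choiceType) (lam : C).
Local Notation M := (Mon X).
Local Notation W := (seq M).
Local Notation Q := {malg C[W]}.

Definition pair (phi : W -> C) (P : Q) : C := \sum_(w <- msupp P) P@_w * phi w.

Lemma pairEw phi (d : {fset W}) P : msupp P `<=` d ->
  pair phi P = \sum_(w <- d) P@_w * phi w.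
Proof.
move=> le; rewrite /pair [LHS](big_fset_incl _ le) => //= x xd /mcoeff_outdom ->.
by rewrite mul0r.
Qed.

Lemma pair0 phi : pair phi 0 = 0.
Proof. by rewrite /pair msupp0 big_seq_fset0. Qed.

Lemma pairD phi P R : pair phi (P + R) = pair phi P + pair phi R.
Proof.
rewrite (pairEw phi (msuppD_le P R)).
rewrite (pairEw phi (fsubsetUl (msupp P) (msupp R))).
rewrite (pairEw phi (fsubsetUr (msupp P) (msupp R))).
by rewrite -big_split /=; apply: eq_bigr => w _; rewrite mcoeffD mulrDl.
Qed.

Lemma pairZ phi c P : pair phi (c *: P) = c * pair phi P.
Proof.
rewrite (pairEw phi (msuppZ_le c P)) /pair big_distrr /=.
by apply: eq_bigr => w _; rewrite mcoeffZ mulrA.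
Qed.

Lemma pairN phi P : pair phi (- P) = - pair phi P.
Proof. by rewrite -scaleN1r pairZ mulN1r. Qed.

Lemma pair_sum phi (I : Type) (r : seq I) (F : I -> Q) :
  pair phi (\sum_(i <- r) F i) = \sum_(i <- r) pair phi (F i).
Proof.
elim: r => [|i r IH]; first by rewrite !big_nil pair0.
by rewrite !big_cons pairD IH.
Qed.

Lemma pairU phi c w : pair phi << c *g w >> = c * phi w.
Proof. by rewrite (pairEw phi msuppU_le) big_seq_fset1 mcoeffUU. Qed.

Lemma pair_ext phi psi P : (forall w, phi w = psi w) -> pair phi P = pair psi P.
Proof. by move=> e; apply: eq_bigr => w _; rewrite e. Qed.

Lemma pair_addf phi psi P : pair (fun w => phi w + psi w) P = pair phi P + pair psi P.
Proof. by rewrite /pair -big_split; apply: eq_bigr => w _; rewrite mulrDr. Qed.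

Lemma pair_scalef c phi P : pair (fun w => c * phi w) P = c * pair phi P.
Proof. by rewrite /pair big_distrr; apply: eq_bigr => w _; rewrite mulrCA. Qed.

Lemma pair_0f P : pair (fun _ => 0) P = 0.
Proof. by rewrite /pair big1 // => w _; rewrite mulr0. Qed.

Definition dl (a : M) (phi : W -> C) : W -> C := fun w => phi (a :: w).

Lemma pair_pre phi a P : pair phi (pre a P) = pair (dl a phi) P.
Proof.
by rewrite /pre pair_sum; apply: eq_bigr => w _; rewrite pairU.
Qed.

Definition Dm (phi : W -> C) (u v : W) : C := pair phi (mshuffle lam u v).

Lemma DmE phi u v : Dm phi u v = pair phi (mshuffle lam u v).
Proof. by []. Qed.

Lemma Dm_nil_l phi v : Dm phi [::] v = phi v.
Proof. by rewrite /Dm /= pairU mul1r. Qed.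

Lemma Dm_nil_r phi u : Dm phi u [::] = phi u.
Proof. by case: u => [|a u]; rewrite /Dm /= pairU mul1r. Qed.

Lemma pair_comb phi a b d c X1 Y1 Z1 :
  pair phi (pre a X1 + pre b Y1 + c *: pre d Z1) =
  pair (dl a phi) X1 + pair (dl b phi) Y1 + c * pair (dl d phi) Z1.
Proof.
rewrite pairD pairD pairZ.
by congr (_ + _ + _ * _); apply: pair_pre.
Qed.

Lemma Dm_cons phi a u b v :
  Dm phi (a :: u) (b :: v) =
  Dm (dl a phi) u (b :: v) + Dm (dl b phi) (a :: u) v
  + lam * Dm (dl (mulcm a b) phi) u v.
Proof.
rewrite /Dm [mshuffle lam (a :: u) (b :: v)]/=.
exact: pair_comb.
Qed.

Lemma Dm_ext phi psi u v : (forall w, phi w = psi w) -> Dm phi u v = Dm psi u v.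
Proof. by move=> e; apply: pair_ext. Qed.

Lemma Dm_addf phi psi u v : Dm (fun w => phi w + psi w) u v = Dm phi u v + Dm psi u v.
Proof. exact: pair_addf. Qed.

Lemma Dm_scalef c phi u v : Dm (fun w => c * phi w) u v = c * Dm phi u v.
Proof. exact: pair_scalef. Qed.

Lemma Dm_0f u v : Dm (fun _ => 0) u v = 0.
Proof. exact: pair_0f. Qed.

End Pairing.

Opaque Dm.


Section Hopf.
Variables (C : comNzRingType) (X : choiceType) (lam : C).
Local Notation M := (Mon X).
Local Notation W := (seq M).
Local Notation D := (Dm lam).

Definition smul (phi psi : W -> C) : W -> C :=
  fun w => \sum_(i < (size w).+1) phi (take i w) * psi (drop i w).

Definition conv (F G : W -> W -> C) : W -> W -> C :=
  fun u v => \sum_(i < (size u).+1) \sum_(j < (size v).+1)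
     F (take i u) (take j v) * G (drop i u) (drop j v).

Lemma dl_smul a phi psi w :
  dl a (smul phi psi) w = smul (dl a phi) psi w + phi [::] * dl a psi w.
Proof.
rewrite /dl /smul /= big_ord_recl /= addrC; congr (_ + _).
Qed.

Lemma Hopf phi psi u v : D (smul phi psi) u v = conv (D phi) (D psi) u v.
Proof.
elim: u phi psi v => [|a u IHu] phi psi v.
  rewrite Dm_nil_l /conv /smul /= big_ord1.
  by apply: eq_bigr => j _; rewrite !Dm_nil_l.
elim: v phi psi => [|b v IHv] phi psi.
  rewrite Dm_nil_r /conv /smul; apply: eq_bigr => i _.
  by rewrite big_ord1 /= !Dm_nil_r.
rewrite Dm_cons.
rewrite (Dm_ext _ _ _ (dl_smul a phi psi)) Dm_addf Dm_scalef IHu.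
rewrite (Dm_ext _ _ _ (dl_smul b phi psi)) Dm_addf Dm_scalef IHv.
rewrite (Dm_ext _ _ _ (dl_smul (mulcm a b) phi psi)) Dm_addf Dm_scalef IHu.
set S1 := conv _ _ u (b :: v).
set S2 := conv _ _ (a :: u) v.
set S3 := conv _ _ u v.
have Erest : phi [::] * D (dl a psi) u (b :: v) + phi [::] * D (dl b psi) (a :: u) v
   + lam * (phi [::] * D (dl (mulcm a b) psi) u v) = phi [::] * D psi (a :: u) (b :: v).
  by rewrite Dm_cons !mulrDr mulrCA.
rewrite /conv big_ord_recl /= big_ord_recl /= Dm_nil_l.
rewrite [X in _ = _ + _ + X](eq_bigr (fun i : 'I_(size u).+1 =>
   D phi (a :: take i u) [::] * D psi (drop i u) (b :: v) +
   \sum_(j < (size v).+1) D phi (a :: take i u) (b :: take j v) * D psi (drop i u) (drop j v))); last first.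
  by move=> i _; rewrite big_ord_recl /=.
rewrite big_split /=.
under eq_bigr do rewrite add0n.
have E1 : S1 = \sum_(i < (size u).+1) D phi (a :: take i u) [::] * D psi (drop i u) (b :: v)
   + \sum_(i < (size u).+1) \sum_(j < (size v).+1)
       D (dl a phi) (take i u) (b :: take j v) * D psi (drop i u) (drop j v).
  rewrite /S1 /conv -big_split /=; apply: eq_bigr => i _.
  rewrite big_ord_recl /= !Dm_nil_r /dl; congr (_ + _).
have E2 : S2 = \sum_(j < (size v).+1) D phi [::] (b :: take j v) * D psi (a :: u) (drop j v)
   + \sum_(i < (size u).+1) \sum_(j < (size v).+1)
       D (dl b phi) (a :: take i u) (take j v) * D psi (drop i u) (drop j v).
  rewrite /S2 /conv big_ord_recl /=; congr (_ + _).
  by apply: eq_bigr => j _; rewrite !Dm_nil_l.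
have E3 : \sum_(i < (size u).+1) \sum_(j < (size v).+1)
      D phi (a :: take i u) (b :: take j v) * D psi (drop i u) (drop j v)
  = \sum_(i < (size u).+1) \sum_(j < (size v).+1)
       D (dl a phi) (take i u) (b :: take j v) * D psi (drop i u) (drop j v)
  + \sum_(i < (size u).+1) \sum_(j < (size v).+1)
       D (dl b phi) (a :: take i u) (take j v) * D psi (drop i u) (drop j v)
  + lam * S3.
  rewrite /S3 /conv big_distrr -!big_split /=; apply: eq_bigr => i _.
  rewrite big_distrr -!big_split /=; apply: eq_bigr => j _.
  by rewrite Dm_cons !mulrDl mulrA.
rewrite E3 E1 E2 -Erest.
ring.
Qed.
End Hopf.


Section Mono.
Variables (X : choiceType) (x : X).
Local Notation M := (Mon X).
Definition o : M := @onecm X.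
Definition yx : M := ucm x.

Lemma mulcm_eq_o (a b : M) : (mulcm a b == o) = (a == o) && (b == o).
Proof. exact: cmM_eq1. Qed.

Lemma yx_neq_o : (yx == o) = false.
Proof. exact: cm1_eq1. Qed.

Lemma mulcm_eq_y (a b : M) :
  (mulcm a b == yx) = ((a == o) && (b == yx)) || ((a == yx) && (b == o)).
Proof.
apply/eqP/idP => [h|].
  have hd : (mdeg a + mdeg b = 1)%N.
    rewrite -(mdegM a b); change (mdeg (mulcm a b) = 1%N); by rewrite h mdegU.
  have : (mdeg a == 0%N) || (mdeg b == 0%N).
    by move: hd; case: (mdeg a) => [|[|n]] //=; case: (mdeg b).
  case/orP => /eqP /mdeg_eq0I ha.
    have ea : a = o by [].
    rewrite ea /o mul0cm in h; rewrite ea h /o !eqxx //.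
  have eb : b = o by [].
  rewrite eb /o mulcm0 in h; rewrite eb h /o !eqxx orbT //.
by case/orP=> /andP[/eqP-> /eqP->]; rewrite /o ?mul0cm ?mulcm0.
Qed.
End Mono.

Section Series.
Variables (C : comNzRingType) (X : choiceType) (lam : C) (x : X).
Local Notation M := (Mon X).
Local Notation W := (seq M).
Local Notation D := (Dm lam).
Local Notation o := (o X).
Local Notation yx := (yx x).

Definition e : W -> C := fun w => (w == [::])%:R.
Definition ind (s : W) : W -> C := fun w => (w == s)%:R.
Definition Lo := ind [:: o].
Definition Ly := ind [:: yx].
Definition gg : W -> C := fun w => e w + lam * Lo w.

Lemma D_e u v : D e u v = e u * e v.
Proof.
case: u => [|a u]; first by rewrite Dm_nil_l /e eqxx mul1r.
case: v => [|b v]; first by rewrite Dm_nil_r /e eqxx mulr1.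
have h0 c : forall w, dl c e w = (fun _ => 0) w by [].
by rewrite Dm_cons !(Dm_ext _ _ _ (h0 _)) !Dm_0f /e /= mulr0 !addr0 mulr0.
Qed.

Lemma dl_ind c s w : dl c (ind s) w = (match s with [::] => 0 | d :: s' => (c == d)%:R * ind s' w end).
Proof.
rewrite /dl /ind; case: s => [|d s] //=.
by rewrite eqseq_cons; case: (c == d); rewrite /= ?mul1r ?mul0r.
Qed.

Lemma dl_Lo c w : dl c Lo w = (c == o)%:R * e w.
Proof. by rewrite /Lo dl_ind. Qed.
Lemma dl_Ly c w : dl c Ly w = (c == yx)%:R * e w.
Proof. by rewrite /Ly dl_ind. Qed.

Lemma e_nil : e [::] = 1. Proof. by rewrite /e eqxx. Qed.
Lemma e_cons a w : e (a :: w) = 0. Proof. by []. Qed.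
Lemma Lo_nil : Lo [::] = 0. Proof. by []. Qed.
Lemma Ly_nil : Ly [::] = 0. Proof. by []. Qed.
Lemma Lo_cons a w : Lo (a :: w) = (a == o)%:R * e w.
Proof. exact: (dl_Lo a w). Qed.
Lemma Ly_cons a w : Ly (a :: w) = (a == yx)%:R * e w.
Proof. exact: (dl_Ly a w). Qed.
Lemma natr_and (p q : bool) : (p && q)%:R = p%:R * q%:R :> C.
Proof. by case: p; case: q; rewrite /= ?mulr1 ?mulr0. Qed.
Lemma nb0 : (false)%:R = 0 :> C. Proof. by []. Qed.
Lemma nb1 : (true)%:R = 1 :> C. Proof. by []. Qed.

Lemma D_cons_gen (phi : W -> C) (f : M -> C) :
  (forall c w, phi (c :: w) = f c * e w) ->
  forall a u b v, D phi (a :: u) (b :: v) = lam * (f (mulcm a b) * (e u * e v)).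
Proof.
move=> hphi a u b v.
have hd c : forall w, dl c phi w = f c * e w by move=> w; rewrite /dl hphi.
rewrite Dm_cons (Dm_ext lam u (b :: v) (hd a)) (Dm_ext lam (a :: u) v (hd b)).
rewrite (Dm_ext lam u v (hd (mulcm a b))) !Dm_scalef !D_e !e_cons.
by rewrite mulr0 mul0r !mulr0 !add0r.
Qed.

Lemma D_prim1 (phi : W -> C) (f : M -> C) :
  phi [::] = 0 -> (forall c w, phi (c :: w) = f c * e w) ->
  (forall a b, f (mulcm a b) = f a * f b) ->
  forall u v, D phi u v = phi u * e v + e u * phi v + lam * (phi u * phi v).
Proof.
move=> h0 hc hm [|a u] [|b v].
- by rewrite Dm_nil_l h0 e_nil; ring.
- by rewrite Dm_nil_l h0 e_nil; move: (phi (b :: v)) (e (b :: v)) => p q; ring.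
- by rewrite Dm_nil_r h0 e_nil; move: (phi (a :: u)) (e (a :: u)) => p q; ring.
rewrite (D_cons_gen hc) hm !hc !e_cons !mulr0 !mul0r !add0r.
move: (f a) (f b) (e u) (e v) => p q r s; ring.
Qed.

Lemma D_prim2 (phi psi : W -> C) (f h : M -> C) :
  phi [::] = 0 -> psi [::] = 0 ->
  (forall c w, phi (c :: w) = f c * e w) ->
  (forall c w, psi (c :: w) = h c * e w) ->
  (forall a b, f (mulcm a b) = h a * f b + f a * h b) ->
  forall u v, D phi u v = phi u * (e v + lam * psi v) + (e u + lam * psi u) * phi v.
Proof.
move=> h0 k0 hc kc hm [|a u] [|b v].
- by rewrite Dm_nil_l h0 k0 e_nil; ring.
- by rewrite Dm_nil_l h0 k0 e_nil; move: (phi (b :: v)) (psi (b :: v)) (e (b :: v)) => p q r; ring.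
- by rewrite Dm_nil_r h0 k0 e_nil; move: (phi (a :: u)) (psi (a :: u)) (e (a :: u)) => p q r; ring.
rewrite (D_cons_gen hc) hm !hc !kc !e_cons !add0r.
move: (f a) (f b) (h a) (h b) (e u) (e v) => p q r s t z; ring.
Qed.

Lemma D_Lo u v : D Lo u v = Lo u * e v + e u * Lo v + lam * (Lo u * Lo v).
Proof.
apply: (@D_prim1 Lo (fun c => (c == o)%:R)) => //.
  exact: Lo_cons.
by move=> a b; rewrite mulcm_eq_o natr_and.
Qed.

Lemma D_Ly u v : D Ly u v = Ly u * gg v + gg u * Ly v.
Proof.
apply: (@D_prim2 Ly Lo (fun c => (c == yx)%:R) (fun c => (c == o)%:R)) => //.
- exact: Ly_cons.
- exact: Lo_cons.
move=> a b; rewrite mulcm_eq_y.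
case: (eqVneq a o) => [->|ha].
  by rewrite (eq_sym o yx) yx_neq_o; case: (b == yx); case: (b == o);
    rewrite /= ?nb0 ?nb1 ?mul1r ?mul0r ?mulr1 ?mulr0 ?addr0 ?add0r.
by case: (a == yx); case: (b == o); case: (b == yx);
    rewrite /= ?nb0 ?nb1 ?mul1r ?mul0r ?mulr1 ?mulr0 ?addr0 ?add0r.
Qed.
End Series.


Section Tensor.
Variables (C : comNzRingType) (X : choiceType) (lam : C).
Local Notation M := (Mon X).
Local Notation W := (seq M).
Local Notation D := (Dm lam).

Definition tevs (T : seq (C * (W -> C) * (W -> C))) (u v : W) : C :=
  \sum_(p <- T) p.1.1 * (p.1.2 u * p.2 v).

Lemma conv_ext (F F' G G' : W -> W -> C) u v :
  (forall u v, F u v = F' u v) -> (forall u v, G u v = G' u v) ->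
  conv F G u v = conv F' G' u v.
Proof.
move=> hF hG; rewrite /conv; apply: eq_bigr => i _; apply: eq_bigr => j _.
by rewrite hF hG.
Qed.

Lemma conv_tevs T1 T2 u v :
  conv (tevs T1) (tevs T2) u v =
  \sum_(p <- T1) \sum_(q <- T2) (p.1.1 * q.1.1) *
      (smul p.1.2 q.1.2 u * smul p.2 q.2 v).
Proof.
rewrite /conv /tevs.
under eq_bigr do under eq_bigr do rewrite big_distrlr.
under eq_bigr do rewrite exchange_big.
rewrite exchange_big; apply: eq_bigr => p _.
under eq_bigr do rewrite exchange_big.
rewrite exchange_big; apply: eq_bigr => q _.
rewrite /smul big_distrlr mulr_sumr; apply: eq_bigr => i _.
rewrite mulr_sumr; apply: eq_bigr => j _.
move: (p.1.1) (q.1.1) (p.1.2 (take i u)) (p.2 (take j v)) (q.1.2 (drop i u)) (q.2 (drop j v)) => a b c d f g.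
change ((a * (c * d)) * (b * (f * g)) = a * b * ((c * f) * (d * g))); ring.
Qed.
End Tensor.

Section Smul.
Variables (C : comNzRingType) (X : choiceType) (lam : C).
Local Notation M := (Mon X).
Local Notation W := (seq M).
Local Notation e := (@e C X).
Local Notation o := (o X).

Lemma smul_e_l (phi : W -> C) w : smul e phi w = phi w.
Proof.
case: w => [|c w]; first by rewrite /smul big_ord1 /= e_nil mul1r.
rewrite /smul big_ord_recl big1 ?addr0 /=; first by rewrite e_nil mul1r.
by move=> i _; rewrite e_cons mul0r.
Qed.

Lemma e_drop_lt (w : W) i : (i < size w)%N -> e (drop i w) = 0.
Proof.
elim: w i => [|c w IH] i h; first by [].
case: i h => [|i] h; first by rewrite drop0 e_cons.
exact: IH.
Qed.

Lemma smul_e_r (phi : W -> C) w : smul phi e w = phi w.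
Proof.
rewrite /smul big_ord_recr /=.
rewrite (_ : take _ w = w); last exact: take_size.
rewrite (_ : drop _ w = [::]); last exact: drop_size.
rewrite e_nil mulr1 big1 ?add0r //.
by move=> i _; rewrite e_drop_lt ?mulr0.
Qed.

Definition all1 (w : W) := all (fun c => c == o) w.
Definition sup1 (f : W -> C) := forall w, ~~ all1 w -> f w = 0.

Lemma sup1_e : sup1 e.
Proof. by case=> [|c w] //= _; rewrite e_cons. Qed.

Lemma sup1_Lo : sup1 (@Lo C X).
Proof.
case=> [|c w] /=; first by rewrite Lo_nil.
rewrite Lo_cons; case: (c == o) => /= h; last by rewrite mul0r.
by rewrite sup1_e ?mulr0.
Qed.

Lemma sup1_gg : sup1 (gg lam).
Proof. by move=> w h; rewrite /gg sup1_e // sup1_Lo // mulr0 addr0. Qed.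

Lemma sup1_smul f h : sup1 f -> sup1 h -> sup1 (smul f h).
Proof.
move=> hf hh w nw; rewrite /smul big1 // => i _.
have : ~~ all1 (take i w) || ~~ all1 (drop i w).
  by rewrite -negb_and /all1 -all_cat cat_take_drop.
by case/orP => H; [rewrite hf ?mul0r | rewrite hh ?mulr0].
Qed.

Lemma smul_comm1 f h : sup1 f -> sup1 h -> forall w, smul f h w = smul h f w.
Proof.
move=> hf hh w; case: (boolP (all1 w)) => aw; last first.
  by rewrite !sup1_smul.
have /all_pred1P ew : all (pred1 o) w by [].
rewrite ew /smul size_nseq.
set n := size w.
rewrite (reindex_inj rev_ord_inj) /=; apply: eq_bigr => i _.
have hi : (i <= n)%N by rewrite -ltnS.
rewrite subSS (take_nseq _ (leq_subr i n)) (take_nseq _ hi) !drop_nseq (subKn hi).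
by rewrite mulrC.
Qed.
End Smul.

Section Ad.
Variables (C : comNzRingType) (X : choiceType) (lam : C) (x : X).
Local Notation M := (Mon X).
Local Notation W := (seq M).
Local Notation D := (Dm lam).
Local Notation e := (@e C X).
Local Notation o := (o X).
Local Notation yx := (yx x).
Local Notation Lo := (@Lo C X).
Local Notation Ly := (@Ly C X x).

Lemma smul_ext (f f' h h' : W -> C) w :
  (forall w, f w = f' w) -> (forall w, h w = h' w) -> smul f h w = smul f' h' w.
Proof. by move=> hf hh; apply: eq_bigr => i _; rewrite hf hh. Qed.

Lemma ad_step (E L A G : W -> C) :
  (forall phi w, smul E phi w = phi w) ->
  (forall phi w, smul phi E w = phi w) ->
  (forall u v, D L u v = L u * E v + E u * L v + lam * (L u * L v)) ->
  (forall u v, D A u v = A u * G v + G u * A v) ->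
  (forall w, smul G L w = smul L G w) ->
  forall u v, D (fun w => smul L A w - smul A L w) u v =
   (smul L A u - smul A L u) * (G v + lam * smul L G v)
   + (G u + lam * smul L G u) * (smul L A v - smul A L v).
Proof.
move=> hEl hEr hL hA hLG u v.
have hx : forall w, smul L A w - smul A L w = smul L A w + (-1) * smul A L w.
  by move=> w; rewrite mulN1r.
rewrite (Dm_ext lam u v hx) Dm_addf Dm_scalef !Hopf.
have hL' : forall u v, D L u v = tevs [:: (1, L, E); (1, E, L); (lam, L, L)] u v.
  by move=> u' v'; rewrite hL /tevs !big_cons big_nil /=; ring.
have hA' : forall u v, D A u v = tevs [:: (1, A, G); (1, G, A)] u v.
  by move=> u' v'; rewrite hA /tevs !big_cons big_nil /=; ring.
rewrite (conv_ext u v hL' hA') (conv_ext u v hA' hL') !conv_tevs.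
rewrite !big_cons !big_nil /=.
rewrite !hEl !hEr !hLG.
ring.
Qed.

Fixpoint adm (m : nat) : W -> C :=
  match m with
  | 0 => Ly
  | m'.+1 => fun w => smul Lo (adm m') w - smul (adm m') Lo w
  end.

Fixpoint Gm (m : nat) : W -> C :=
  match m with
  | 0 => gg lam
  | m'.+1 => fun w => Gm m' w + lam * smul Lo (Gm m') w
  end.

Lemma sup1_Gm m : sup1 (Gm m).
Proof.
elim: m => [|m IH] /=; first exact: sup1_gg.
move=> w hw; rewrite IH // (sup1_smul (@sup1_Lo C X) IH) // mulr0 addr0 //.
Qed.

Lemma D_adm m u v : D (adm m) u v = adm m u * Gm m v + Gm m u * adm m v.
Proof.
elim: m u v => [|m IH] u v; first exact: D_Ly.
exact: (ad_step (@smul_e_l C X) (@smul_e_r C X) (D_Lo lam) IH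
          (smul_comm1 (sup1_Gm m) (@sup1_Lo C X))).
Qed.
End Ad.


Section Vals.
Variables (C : comNzRingType) (X : choiceType) (lam : C) (x : X).
Local Notation M := (Mon X).
Local Notation W := (seq M).
Local Notation D := (Dm lam).
Local Notation e := (@e C X).
Local Notation o := (o X).
Local Notation yx := (yx x).
Local Notation Lo := (@Lo C X).
Local Notation Ly := (@Ly C X x).
Local Notation adm := (@adm C X x).

Definition hom (k : nat) (f : W -> C) := forall w, size w != k -> f w = 0.

Lemma hom_smul k l f h : hom k f -> hom l h -> hom (k + l) (smul f h).
Proof.
move=> hf hh w hw; rewrite /smul big1 // => i _.
case: (eqVneq (size (take i w)) k) => [hk|hk]; last by rewrite hf ?mul0r.
case: (eqVneq (size (drop i w)) l) => [hl|hl]; last by rewrite hh ?mulr0.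
have : size w = (k + l)%N by rewrite -(cat_take_drop i w) size_cat hk hl.
by move=> hs; rewrite hs eqxx in hw.
Qed.

Lemma hom_Lo : hom 1 Lo.
Proof.
case=> [|c [|d w]] h; [by rewrite Lo_nil | by [] | by rewrite Lo_cons e_cons mulr0].
Qed.

Lemma hom_Ly : hom 1 Ly.
Proof.
case=> [|c [|d w]] h; [by rewrite Ly_nil | by [] | by rewrite Ly_cons e_cons mulr0].
Qed.

Lemma hom_adm m : hom m.+1 (adm m).
Proof.
elim: m => [|m IH]; first exact: hom_Ly.
move=> w hw /=.
rewrite (hom_smul hom_Lo IH) ?add1n //.
by rewrite (hom_smul IH hom_Lo) ?addn1 // subr0.
Qed.

Definition wy (m : nat) : W := nseq m o ++ [:: yx].

Lemma smul_Lo_cons (A : W -> C) w : smul Lo A (o :: w) = A w.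
Proof.
have := dl_smul o Lo A w; rewrite /dl => ->.
rewrite Lo_nil mul0r addr0.
rewrite (smul_ext (f' := e) (h' := A) w); first exact: smul_e_l.
  by move=> w'; rewrite -/(dl o Lo w') dl_Lo eqxx mul1r.
by [].
Qed.

Lemma e_rcons s : e (s ++ [:: yx]) = 0.
Proof. by case: s => [|c s]; rewrite /= e_cons. Qed.

Lemma smul_A_Lo_y (A : W -> C) s : smul A Lo (s ++ [:: yx]) = 0.
Proof.
elim: s A => [|c s IH] A.
  have := dl_smul yx A Lo [::]; rewrite /dl => /= ->.
  rewrite /smul big_ord1 take0 drop0 Lo_nil Lo_cons yx_neq_o nb0.
  by rewrite mul0r !mulr0 addr0.
rewrite cat_cons.
have := dl_smul c A Lo (s ++ [:: yx]); rewrite /dl => ->.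
by rewrite IH Lo_cons e_rcons !mulr0 addr0.
Qed.

Lemma adm_wy m : adm m (wy m) = 1.
Proof.
elim: m => [|m IH].
  by rewrite /= /wy /= Ly_cons eqxx e_nil mulr1.
rewrite /=.
have -> : wy m.+1 = o :: wy m by [].
rewrite smul_Lo_cons IH.
have := smul_A_Lo_y (adm m) (o :: nseq m o); rewrite cat_cons => ->.
by rewrite subr0.
Qed.

Lemma adm_wy0 m n : m != n -> adm m (wy n) = 0.
Proof.
move=> hmn; apply: hom_adm.
by rewrite /wy size_cat size_nseq addn1 eqSS eq_sym.
Qed.

Lemma all1_wy n : all1 (wy n) = false.
Proof.
by rewrite /all1 /wy all_cat /= yx_neq_o andbF.
Qed.

Lemma D_sup1 (phi : W -> C) u v : sup1 phi -> ~~ all1 v -> D phi u v = 0.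
Proof.
elim: u phi v => [|a u IHu] phi v hphi hv; first by rewrite Dm_nil_l hphi.
elim: v phi hphi hv => [|b v IHv] phi hphi hv; first by [].
have sdl c : sup1 (dl c phi).
  by move=> w hw; rewrite /dl hphi //= negb_and hw orbT.
have zdl c : c != o -> forall w, dl c phi w = (fun _ => 0) w.
  by move=> hc w; rewrite /dl hphi //= negb_and hc.
rewrite Dm_cons (IHu _ _ (sdl a) hv).
have -> : D (dl b phi) (a :: u) v = 0.
  case: (eqVneq b o) => [eb|nb]; last by rewrite (Dm_ext lam _ _ (zdl b nb)) Dm_0f.
  apply: IHv => //; move: hv; by rewrite /all1 /= eb eqxx.
have -> : D (dl (mulcm a b) phi) u v = 0.
  case: (eqVneq (mulcm a b) o) => [eab|nab]; last by rewrite (Dm_ext lam _ _ (zdl _ nab)) Dm_0f.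
  move: (eab); move/eqP; rewrite mulcm_eq_o => /andP[_ /eqP eb].
  apply: IHu => //; move: hv; by rewrite /all1 /= eb eqxx.
by rewrite mulr0 !addr0.
Qed.
End Vals.


Section ShaLevel.
Variables (C : comNzRingType) (X : choiceType) (lam : C) (x : X).
Local Notation M := (Mon X).
Local Notation W := (seq M).
Local Notation Wd := (Word X).
Local Notation S := (Sha C X).
Local Notation D := (Dm lam).
Local Notation o := (o X).
Local Notation adm := (@adm C X x).

Definition gpair (chi : Wd -> C) (f : S) : C := \sum_(w <- msupp f) f@_w * chi w.

Lemma gpairEw chi (d : {fset Wd}) f : msupp f `<=` d ->
  gpair chi f = \sum_(w <- d) f@_w * chi w.
Proof.
move=> le; rewrite /gpair [LHS](big_fset_incl _ le) => //= w wd /mcoeff_outdom ->.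
by rewrite mul0r.
Qed.

Lemma gpair0 chi : gpair chi 0 = 0.
Proof. by rewrite /gpair msupp0 big_seq_fset0. Qed.

Lemma gpairD chi f g : gpair chi (f + g) = gpair chi f + gpair chi g.
Proof.
rewrite (gpairEw chi (msuppD_le f g)).
rewrite (gpairEw chi (fsubsetUl (msupp f) (msupp g))).
rewrite (gpairEw chi (fsubsetUr (msupp f) (msupp g))).
by rewrite -big_split /=; apply: eq_bigr => w _; rewrite mcoeffD mulrDl.
Qed.

Lemma gpairZ chi c f : gpair chi (c *: f) = c * gpair chi f.
Proof.
rewrite (gpairEw chi (msuppZ_le c f)) /gpair big_distrr /=.
by apply: eq_bigr => w _; rewrite mcoeffZ mulrA.
Qed.

Lemma gpairB chi f g : gpair chi (f - g) = gpair chi f - gpair chi g.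
Proof. by rewrite gpairD -scaleN1r gpairZ mulN1r. Qed.

Lemma gpair_sum chi (I : Type) (r : seq I) (F : I -> S) :
  gpair chi (\sum_(i <- r) F i) = \sum_(i <- r) gpair chi (F i).
Proof.
elim: r => [|i r IH]; first by rewrite !big_nil gpair0.
by rewrite !big_cons gpairD IH.
Qed.

Lemma gpairU chi c w : gpair chi << c *g w >> = c * chi w.
Proof. by rewrite (gpairEw chi msuppU_le) big_seq_fset1 mcoeffUU. Qed.

Lemma gpair_coef t f : f@_t = gpair (fun w => (w == t)%:R) f.
Proof.
rewrite {1}(monalgE f) raddf_sum /=; apply: eq_bigr => k _.
by rewrite mcoeffU mulr_natr.
Qed.

Lemma gpair_word_mul chi (u v : Wd) :
  gpair chi (word_mul lam u v) = D (fun w => chi (mulcm u.1 v.1, w)) u.2 v.2.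
Proof.
rewrite DmE /word_mul gpair_sum /pair; apply: eq_bigr => w _.
by rewrite gpairU.
Qed.

Lemma gpair_sha_mul chi r f :
  gpair chi (sha_mul lam r f) =
  \sum_(u <- msupp r) \sum_(v <- msupp f)
     (r@_u * f@_v) * D (fun w => chi (mulcm u.1 v.1, w)) u.2 v.2.
Proof.
rewrite /sha_mul gpair_sum; apply: eq_bigr => u _.
rewrite gpair_sum; apply: eq_bigr => v _.
by rewrite gpairZ gpair_word_mul.
Qed.

Definition Iset (n : nat) (f : S) : Prop :=
  (forall t : Wd, all1 t.2 -> f@_t = 0) /\
  (forall m, (n <= m)%N -> gpair (fun w => adm m w.2) f = 0).

Lemma Iset_ideal n : sha_ideal lam (Iset n).
Proof.
split.
- split; first by move=> t _; rewrite mcoeff0.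
  by move=> m _; rewrite gpair0.
- move=> f g [hf1 hf2] [hg1 hg2]; split.
    by move=> t ht; rewrite mcoeffB hf1 // hg1 // subr0.
  by move=> m hm; rewrite gpairB hf2 // hg2 // subr0.
move=> r f [hf1 hf2]; split.
  move=> t ht; rewrite gpair_coef gpair_sha_mul big1 // => u _.
  rewrite big1 // => v _.
  case: (boolP (all1 v.2)) => hv; first by rewrite hf1 // mulr0 mul0r.
  rewrite D_sup1 ?mulr0 //.
  move=> w hw; case: eqP => // ewt.
  by rewrite -ewt /= in ht; rewrite ht in hw.
move=> m hm; rewrite gpair_sha_mul.
have Hterm : forall (u v : Wd), (r@_u * f@_v) *
     D (fun w => (fun w0 : Wd => adm m w0.2) (mulcm u.1 v.1, w)) u.2 v.2
   = (r@_u * Gm lam m u.2) * (f@_v * adm m v.2).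
  move=> u v.
  rewrite (@Dm_ext C X lam (fun w => (fun w0 : Wd => adm m w0.2) (mulcm u.1 v.1, w)) (adm m) u.2 v.2) //.
  rewrite D_adm.
  case: (boolP (all1 v.2)) => hv; first by rewrite hf1 // !(mulr0, mul0r).
  rewrite (sup1_Gm lam m hv) mulr0 add0r.
  move: (r@_u) (f@_v) (Gm lam m u.2) (adm m v.2) => p q s z; ring.
rewrite (eq_bigr (fun u => (r@_u * Gm lam m u.2) * gpair (fun w => adm m w.2) f)).
  by rewrite hf2 // big1 // => u _; rewrite mulr0.
move=> u _; rewrite /gpair big_distrr /=; apply: eq_bigr => v _.
by rewrite Hterm.
Qed.

Lemma Iset_incr n f : Iset n f -> Iset n.+1 f.
Proof.
move=> [h1 h2]; split => // m hm; apply: h2.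
exact: ltnW.
Qed.

Definition fw (n : nat) : S := << (o, wy x n) >>.

Lemma fw_in n : Iset n.+1 (fw n).
Proof.
split.
  move=> t ht; rewrite /fw mcoeffU.
  case: eqP => // et; rewrite -et /= all1_wy in ht; by [].
move=> m hm; rewrite /fw gpairU mul1r adm_wy0 //.
by apply/eqP => emn; rewrite emn ltnn in hm.
Qed.

Lemma fw_out n : ~ Iset n (fw n).
Proof.
move=> [_ h2]; have := h2 n (leqnn n).
by rewrite /fw gpairU mul1r adm_wy => /eqP; rewrite oner_eq0.
Qed.
End ShaLevel.

Theorem theorem3p3 (C : comNzRingType) (X : choiceType) (lambda : C) :
  char_zero C -> (exists x : X, True) -> ~ @sha_noetherian C X lambda.
Proof.
move=> _ [x _] H.
have [N HN] := H (fun n => @Iset C X x n) (fun n => @Iset_ideal C X lambda x n)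
  (fun n f => @Iset_incr C X x n f).
have h1 := @fw_in C X x N.
have := (HN N.+1 (leqnSn N) (fw C x N)).1 h1.
exact: fw_out.
Qed.
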